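(* Let $\varphi\colon\mathcal{M}\to\mathcal{X}$ be a smooth lift of the form $\varphi(\lambda,Y_1,\dots,Y_d)=\sum_{i=1}^r\lambda_i\,(Y_1)_{:,i}\otimes\cdots\otimes(Y_d)_{:,i}$, where $\mathcal{M}$ is a smooth embedded submanifold of $\mathbb{R}^r\times\mathbb{R}^{n_1\times r}\times\cdots\times\mathbb{R}^{n_d\times r}$. Let $(\lambda,Y_1,\dots,Y_d)\in\mathcal{M}$ and $X=\varphi(\lambda,Y_1,\dots,Y_d)$, and suppose $\mathrm{col}(Y_1)^\perp\otimes\cdots\otimes\mathrm{col}(Y_d)^\perp\not\subseteq(\mathrm{T}_X\mathcal{X})^*$. If $d\ge3$, then $\varphi$ does not satisfy ''2 $\Rightarrow$ 1'' at $(\lambda,Y_1,\dots,Y_d)$. If $d=2$ and $\lambda=0$, then $\varphi$ does not satisfy ''2 $\Rightarrow$ 1'' at $(0,Y_1,Y_2)$.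
   Context: $(Y)_{:,i}$ is the $i$-th column of $Y$; $\otimes$ is the tensor (outer) product, with values in $\mathbb{R}^{n_1\times\cdots\times n_d}$ equipped with the standard inner product; $\mathrm{col}(Y_j)^\perp\subseteq\mathbb{R}^{n_j}$ is the orthogonal complement of the column space, and $\mathrm{col}(Y_1)^\perp\otimes\cdots\otimes\mathrm{col}(Y_d)^\perp$ is the linear span of the tensors $u_1\otimes\cdots\otimes u_d$ with $u_j\in\mathrm{col}(Y_j)^\perp$. $\mathcal{X}=\varphi(\mathcal{M})$. Tangent cone $\mathrm{T}_X\mathcal{X}=\{\lim(X_i-X)/\tau_i: X_i\in\mathcal{X},\tau_i>0,\tau_i\to0\}$; $K^*=\{U:\langle U,V\rangle\ge0\ \forall V\in K\}$. For $g=f\circ\varphi$, $y$ is 2-critical if $(g\circ c)'(0)=0$ and $(g\circ c)''(0)\ge0$ for all smooth curves $c$ in $\mathcal{M}$ with $c(0)=y$. ''2 $\Rightarrow$ 1'' at $y$: for every twice differentiable $f$ on $\mathbb{R}^{n_1\times\cdots\times n_d}$, if $y$ is 2-critical for $f\circ\varphi$ then $\varphi(y)$ is stationary, i.e., $\nabla f(\varphi(y))\in(\mathrm{T}_{\varphi(y)}\mathcal{X})^*$. *)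

(* Defs.v *)
From HB Require Import structures.
From mathcomp Require Import all_boot all_order all_algebra.
From mathcomp Require Import all_classical all_reals all_analysis.
Set Implicit Arguments. Unset Strict Implicit. Unset Printing Implicit Defensive.
Import Order.TTheory GRing.Theory Num.Theory.
Import numFieldNormedType.Exports.
Local Open Scope classical_set_scope.
Local Open Scope ring_scope.

Section Defs.
Variable R : realType.

(* A finite-dimensional Euclidean space with coordinates indexed by a finType
   I is represented as 'rV[R]_#|I|; coordinate i is  X 0 (enum_rank i). *)
Definition coord {I : finType} (X : 'rV[R]_#|I|) (i : I) : R := X 0 (enum_rank i).
Definition mkvec {I : finType} (F : I -> R) : 'rV[R]_#|I| :=
  \row_k F (enum_val k).

Definition inner {N : nat} (U V : 'rV[R]_N) : R := \sum_k U 0 k * V 0 k.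

Fixpoint Ck {N : nat} {W : normedModType R} (k : nat) (h : 'rV[R]_N -> W) : Prop :=
  match k with
  | 0 => continuous h
  | k'.+1 => (forall x, differentiable h x) /\
             forall p : 'I_N, Ck k' (fun x => 'D_(delta_mx 0 p) h x)
  end.
Definition smooth {N : nat} {W : normedModType R} (h : 'rV[R]_N -> W) :=
  forall k, Ck k h.

Definition smooth_curve {W : normedModType R} (c : R -> W) :=
  forall (k : nat) (t : R), derivable (derive1n k c) t 1.

Definition grad {N : nat} (f : 'rV[R]_N -> R) (X : 'rV[R]_N) : 'rV[R]_N :=
  \row_p 'D_(delta_mx 0 p) f X.

Definition twice_differentiable {N : nat} (f : 'rV[R]_N -> R) :=
  (forall X, differentiable f X) /\ (forall X, differentiable (grad f) X).

(* smooth embedded submanifold of R^N: locally a regular level set of a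
   smooth map *)
Definition embedded_submanifold {N : nat} (M : set 'rV[R]_N) :=
  forall y, M y -> exists U : set 'rV[R]_N, open U /\ U y /\
    exists (k : nat) (h : 'rV[R]_N -> 'rV[R]_k), smooth h /\
      (forall x, U x -> (M x <-> h x = 0)) /\
      (forall x, U x -> forall w, exists v, 'd h x v = w).

Definition tangent_cone {N : nat} (S : set 'rV[R]_N) (X : 'rV[R]_N) : set 'rV[R]_N :=
  [set V | exists (Xs : nat -> 'rV[R]_N) (tau : nat -> R),
     (forall i, S (Xs i)) /\ (forall i, 0 < tau i) /\
     tau @ \oo --> 0 /\
     (fun i => (tau i)^-1 *: (Xs i - X)) @ \oo --> V].

Definition dual_cone {N : nat} (K : set 'rV[R]_N) : set 'rV[R]_N :=
  [set U | forall V, K V -> 0 <= inner U V].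

Section Tensor.
Variables (d r : nat) (n : 'I_d -> nat).

(* multi-indices of R^{n_1 x ... x n_d} *)
Local Notation tidx := ({dffun forall j : 'I_d, 'I_(n j)}).
Definition tensor := 'rV[R]_#|{: tidx}|.

(* coordinates of R^r x R^{n_1 x r} x ... x R^{n_d x r} *)
Local Notation pidx := (('I_r + {j : 'I_d & ('I_(n j) * 'I_r)%type})%type).
Definition param := 'rV[R]_#|{: pidx}|.

Definition lam (y : param) (i : 'I_r) : R := coord y (inl i).
Definition Ymat (y : param) (j : 'I_d) (a : 'I_(n j)) (i : 'I_r) : R :=
  coord y (inr (existT _ j (a, i))).

Definition phi (y : param) : tensor :=
  mkvec (fun a : tidx => \sum_(i < r) lam y i * \prod_(j < d) @Ymat y j (a j) i).

Definition outer (u : forall j : 'I_d, 'I_(n j) -> R) : tensor :=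
  mkvec (fun a : tidx => \prod_(j < d) u j (a j)).

Definition in_col_perp (y : param) (j : 'I_d) (u : 'I_(n j) -> R) :=
  forall i : 'I_r, \sum_(a < n j) u a * @Ymat y j a i = 0.

(* col(Y_1)^perp o ... o col(Y_d)^perp : linear span of elementary tensors *)
Definition perp_tensor_span (y : param) : set tensor :=
  [set W | exists (m : nat) (coef : 'I_m -> R)
             (u : 'I_m -> forall j : 'I_d, 'I_(n j) -> R),
     (forall k j, @in_col_perp y j (u k j)) /\
     W = \sum_(k < m) coef k *: outer (u k)].

Definition two_critical (M : set param) (f : tensor -> R) (y : param) :=
  forall c : R -> param, smooth_curve c -> (forall t, M (c t)) -> c 0 = y ->
    derive1 (f \o phi \o c) 0 = 0 /\ 0 <= derive1n 2 (f \o phi \o c) 0.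

Definition stationary (Xset : set tensor) (f : tensor -> R) (X : tensor) :=
  dual_cone (tangent_cone Xset X) (grad f X).

Definition two_implies_one (M : set param) (y : param) :=
  forall f : tensor -> R, twice_differentiable f ->
    two_critical M f y -> stationary (phi @` M) f (phi y).

End Tensor.
End Defs.

(* Main.v *)
Require Import Defs.
From HB Require Import structures.
From mathcomp Require Import all_boot all_order all_algebra.
From mathcomp Require Import all_classical all_reals all_analysis.
From mathcomp Require Import ring.
Set Implicit Arguments. Unset Strict Implicit. Unset Printing Implicit Defensive.
Import Order.TTheory GRing.Theory Num.Theory.
Import numFieldNormedType.Exports.
Local Open Scope classical_set_scope.
Local Open Scope ring_scope.

Section An.
Variable R : realType.

Definition D2 (h : R -> R) := (forall t, derivable h t 1) /\ (forall t, derivable (derive1 h) t 1).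

Lemma derive1M_fun (f g : R -> R) : (forall t, derivable f t 1) -> (forall t, derivable g t 1) ->
  derive1 (f * g) = f * derive1 g + g * derive1 f.
Proof.
move=> df dg; apply/funext => t.
rewrite derive1E deriveM // -!derive1E.
by [].
Qed.

Lemma derive1D_fun (f g : R -> R) : (forall t, derivable f t 1) -> (forall t, derivable g t 1) ->
  derive1 (f + g) = derive1 f + derive1 g.
Proof.
move=> df dg; apply/funext => t.
by rewrite derive1E deriveD // -!derive1E.
Qed.


Lemma D2_cst k : D2 (cst k).
Proof.
split => t; first exact: derivable_cst.
rewrite (_ : derive1 (cst k) = cst 0); first exact: derivable_cst.
by apply/funext => s; rewrite derive1_cst.
Qed.

Lemma D2M f g : D2 f -> D2 g -> D2 (f * g).
Proof.
move=> [df df2] [dg dg2]; split => t; first exact: derivableM.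
rewrite derive1M_fun //; apply: derivableD; exact: derivableM.
Qed.

Lemma D2D f g : D2 f -> D2 g -> D2 (f + g).
Proof.
move=> [df df2] [dg dg2]; split => t; first exact: derivableD.
rewrite derive1D_fun //; exact: derivableD.
Qed.

End An.

Section S1.
Variable R : realType.
Lemma D2_prod (I : finType) (P : pred I) (F : I -> R -> R) :
  (forall i, D2 (F i)) -> D2 (fun t => \prod_(i | P i) F i t).
Proof.
move=> HF. rewrite -fct_prodE.
apply: (big_ind (@D2 R)).
- exact: D2_cst 1.
- move=> x y; exact: D2M.
- move=> i _; exact: HF.
Qed.

Lemma D2_sum (I : finType) (P : pred I) (F : I -> R -> R) :
  (forall i, D2 (F i)) -> D2 (fun t => \sum_(i | P i) F i t).
Proof.
move=> HF. rewrite -fct_sumE.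
apply: (big_ind (@D2 R)).
- exact: D2_cst 0.
- move=> x y; exact: D2D.
- move=> i _; exact: HF.
Qed.

Definition G (h : R -> R) := D2 h /\ derive1 h 0 = 0 /\ derive1 (derive1 h) 0 = 0.

Lemma GD f g : G f -> G g -> G (f + g).
Proof.
move=> [[df df2] [f1 f2]] [[dg dg2] [g1 g2]]; split; first exact: D2D.
rewrite derive1D_fun; [|exact: df|exact: dg]; split.
  change (derive1 f 0 + derive1 g 0 = 0); rewrite f1 g1; exact: addr0.
rewrite derive1E deriveD; [|exact: df2|exact: dg2].
rewrite -!derive1E f2 g2; exact: addr0.
Qed.

Lemma G_cst0 : G (cst 0).
Proof.
have E : derive1 (cst (0:R)) = cst 0 by apply/funext => s; rewrite derive1_cst.
split; first exact: D2_cst.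
rewrite E; split; first reflexivity.
rewrite E; reflexivity.
Qed.

Lemma G_sum (I : finType) (P : pred I) (F : I -> R -> R) :
  (forall i, G (F i)) -> G (fun t => \sum_(i | P i) F i t).
Proof.
move=> HF; rewrite -fct_sumE.
apply: (big_ind G).
- exact: G_cst0.
- move=> x y; exact: GD.
- move=> i _; exact: HF.
Qed.

Lemma derive1_M3 (X Y Z : R -> R) x : derivable X x 1 -> derivable Y x 1 -> derivable Z x 1 ->
  derive1 (X * Y * Z) x = derive1 X x * Y x * Z x + X x * derive1 Y x * Z x + X x * Y x * derive1 Z x.
Proof.
move=> dX dY dZ.
rewrite derive1E deriveM; [|exact: derivableM|exact: dZ].
rewrite deriveM; [|exact: dX|exact: dY].
rewrite -!derive1E.
change (X x * Y x * derive1 Z x + Z x * (X x * derive1 Y x + Y x * derive1 X x) =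
  derive1 X x * Y x * Z x + X x * derive1 Y x * Z x + X x * Y x * derive1 Z x).
ring.
Qed.

Lemma G3 (A B C : R -> R) : D2 A -> D2 B -> D2 C -> A 0 = 0 -> B 0 = 0 -> C 0 = 0 ->
  G (A * B * C).
Proof.
move=> [dA dA2] [dB dB2] [dC dC2] A0 B0 C0.
split; first exact: (D2M (D2M (conj dA dA2) (conj dB dB2)) (conj dC dC2)).
have E : derive1 (A * B * C) = derive1 A * B * C + A * derive1 B * C + A * B * derive1 C.
  apply/funext => t; rewrite derive1_M3; [reflexivity|exact: dA|exact: dB|exact: dC].
rewrite E; split.
  change (derive1 A 0 * B 0 * C 0 + A 0 * derive1 B 0 * C 0 + A 0 * B 0 * derive1 C 0 = 0).
  rewrite A0 B0 C0 !mulr0 !mul0r !addr0; reflexivity.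
have d3 : forall X Y Z : R -> R, derivable X 0 1 -> derivable Y 0 1 -> derivable Z 0 1 ->
   derivable (X * Y * Z) 0 1.
  (move=> X Y Z dX dY dZ; exact: (derivableM (derivableM dX dY) dZ)).
rewrite derive1E deriveD; last first.
- exact: (d3 _ _ _ (dA 0) (dB 0) (dC2 0)).
- exact: (derivableD (d3 _ _ _ (dA2 0) (dB 0) (dC 0)) (d3 _ _ _ (dA 0) (dB2 0) (dC 0))).
rewrite deriveD; last first.
- exact: (d3 _ _ _ (dA 0) (dB2 0) (dC 0)).
- exact: (d3 _ _ _ (dA2 0) (dB 0) (dC 0)).
rewrite -!derive1E.
rewrite (derive1_M3 (dA2 0) (dB 0) (dC 0)) (derive1_M3 (dA 0) (dB2 0) (dC 0)) (derive1_M3 (dA 0) (dB 0) (dC2 0)).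
rewrite A0 B0 C0 !mulr0 !mul0r !addr0; reflexivity.
Qed.
End S1.

Section S2.
Variable R : realType.

Lemma D2M' (f g : R -> R) : D2 f -> D2 g -> D2 (fun t => f t * g t).
Proof. move=> df dg; exact: (D2M df dg). Qed.

Lemma G3' (A B C : R -> R) : D2 A -> D2 B -> D2 C -> A 0 = 0 -> B 0 = 0 -> C 0 = 0 ->
  G (fun t => A t * B t * C t).
Proof. move=> *; exact: G3. Qed.

Lemma coord_D2 (N : nat) (c : R -> 'rV[R]_N) q : smooth_curve c -> D2 (fun t => c t 0 q).
Proof.
move=> sc.
have d0 : forall t, derivable c t 1 := sc 0%N.
have d1 : forall t, derivable (derive1 c) t 1 := sc 1%N.
have E : derive1 (fun t => c t 0 q) = fun t => derive1 c t 0 q.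
  apply/funext => t; rewrite !derive1E derive_mx; last exact: d0.
  rewrite mxE; reflexivity.
split => t; first exact: ((derivable_mxP _ _ _).1 (d0 t) 0 q).
rewrite E; exact: ((derivable_mxP _ _ _).1 (d1 t) 0 q).
Qed.

Lemma derive_coord (N : nat) (X v : 'rV[R]_N) k : 'D_v (fun X : 'rV[R]_N => X 0 k) X = v 0 k.
Proof.
have := derive_mx (@derivable_id _ _ X v).
rewrite derive_id => /(congr1 (fun M : 'rV[R]_N => M 0 k)); rewrite mxE => ->.
reflexivity.
Qed.


Lemma inner_fun (N : nat) (W : 'rV[R]_N) :
  (fun X : 'rV[R]_N => inner W X) = \sum_(k < N) (fun X : 'rV[R]_N => W 0 k * X 0 k).
Proof. rewrite fct_sumE; reflexivity. Qed.

Lemma derivable_lincoord (N : nat) (W X v : 'rV[R]_N) k :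
  derivable (fun X : 'rV[R]_N => W 0 k * X 0 k) X v.
Proof.
exact: (derivableM (derivable_cst (W 0 k) X v) (diff_derivable (v:=v) (differentiable_coord X 0 k))).
Qed.

Lemma grad_inner (N : nat) (W X : 'rV[R]_N) : grad (fun X => inner W X) X = W.
Proof.
apply/rowP => p; rewrite mxE inner_fun derive_sum; last first.
  move=> k; exact: derivable_lincoord.
under eq_bigr => k _.
  rewrite (deriveMl (W 0 k) (diff_derivable (v:=delta_mx 0 p) (differentiable_coord X 0 k))).
  rewrite derive_coord mxE.
  over.
rewrite (bigD1 p) //= eqxx mulr1 big1 ?addr0 // => k kp.
by rewrite (negbTE kp) mulr0.
Qed.

Lemma twice_diff_inner (N : nat) (W : 'rV[R]_N) : twice_differentiable (fun X => inner W X).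
Proof.
split => X.
  rewrite inner_fun; apply: differentiable_sum => k.
  exact: (differentiableM (differentiable_cst (W 0 k) X) (differentiable_coord X 0 k)).
rewrite (_ : grad _ = cst W); first exact: differentiable_cst.
apply/funext => Y; exact: grad_inner.
Qed.

Lemma sum_dffun_prod (K : comPzRingType) (d : nat) (n : 'I_d -> nat)
  (F : forall j : 'I_d, 'I_(n j) -> K) :
  \sum_(a : {dffun forall j : 'I_d, 'I_(n j)}) \prod_(j < d) F j (a j)
  = \prod_(j < d) \sum_(b < n j) F j b.
Proof.
pose T_ := fun j : 'I_d => 'I_(n j).
pose P_ := fun j : 'I_d => [ffun b : T_ j => F j b].
transitivity (\sum_(t : fprod T_) \prod_(j in 'I_d) P_ j (t j)).
  rewrite (reindex (@fprod_of_dffun _ T_)); last first.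
    exact/onW_bij/fprod_of_dffun_bij.
  apply: eq_bigr => a _; apply: eq_bigr => j _.
  by rewrite /P_ ffunE /fprod_of_dffun fprodE.
rewrite big_fprod.
transitivity (\prod_(j < d) \sum_(x | tagged_with T_ j x) untag 0 (P_ j) x).
  by rewrite bigA_distr_big_dep.
apply: eq_bigr => j _.
transitivity (\sum_(b : T_ j) P_ j b); last by apply: eq_bigr => b _; rewrite ffunE.
rewrite (big_tag (fun i => P_ i) j).
by apply: eq_bigl.
Qed.

Lemma inner_outer_phi (d r : nat) (n : 'I_d -> nat) (u : forall j : 'I_d, 'I_(n j) -> R)
  (z : param R r n) :
  inner (outer u) (phi z) =
  \sum_(i < r) lam z i * \prod_(j < d) \sum_(a < n j) u j a * Ymat z a i.
Proof.
rewrite /inner.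
under eq_bigr do rewrite /outer /phi /mkvec !mxE.
rewrite -(big_enum_val (fun a : {dffun forall j : 'I_d, 'I_(n j)} =>
   (\prod_(j < d) u j (a j)) * \sum_(i < r) lam z i * \prod_(j < d) Ymat z (a j) i)).
rewrite (eq_bigl (fun _ => true)); last by [].
under eq_bigr do rewrite big_distrr /=.
rewrite exchange_big /=.
apply: eq_bigr => i _.
under eq_bigr do rewrite mulrCA -big_split /=.
rewrite -big_distrr /=.
rewrite (sum_dffun_prod (fun j b => u j b * Ymat z b i)).
reflexivity.
Qed.

Lemma inner_span (d r : nat) (n : 'I_d -> nat) (m : nat) (coef : 'I_m -> R)
  (u : 'I_m -> forall j : 'I_d, 'I_(n j) -> R) (z : param R r n) :
  inner (\sum_(k < m) coef k *: outer (u k)) (phi z) =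
  \sum_(k < m) \sum_(i < r) coef k * (lam z i * \prod_(j < d) \sum_(a < n j) u k j a * Ymat z a i).
Proof.
rewrite /inner.
under eq_bigr do rewrite summxE big_distrl /=.
rewrite exchange_big /=.
apply: eq_bigr => k _.
under eq_bigr do rewrite mxE -mulrA.
rewrite -big_distrr /=.
have := inner_outer_phi (u k) z; rewrite /inner => ->.
by rewrite big_distrr.
Qed.

End S2.

Section S3.
Variable R : realType.

Lemma G_term (d : nat) (j0 j1 : 'I_d) (j01 : j0 != j1) (cf : R) (lamf : R -> R)
  (P : 'I_d -> R -> R) :
  D2 lamf -> (forall j, D2 (P j)) -> (forall j, P j 0 = 0) ->
  (lamf 0 = 0 \/ exists j2, j2 != j0 /\ j2 != j1) ->
  G (fun t => cf * (lamf t * \prod_(j < d) P j t)).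
Proof.
move=> Dl DP P0 H.
have split2 : forall t, \prod_(j < d) P j t =
   P j0 t * (P j1 t * \prod_(j | (j != j0) && (j != j1)) P j t).
  move=> t; rewrite (bigD1 j0) //= (bigD1 j1) /=; last by rewrite eq_sym j01.
  reflexivity.
pose Rest := fun t => \prod_(j | (j != j0) && (j != j1)) P j t.
have DR : D2 Rest by apply: D2_prod => j; exact: DP.
case: H => [l0 | [j2 [h0 h1]]].
- rewrite (_ : (fun t => cf * (lamf t * \prod_(j < d) P j t)) =
     (fun t => lamf t * P j0 t * (P j1 t * (cf * Rest t)))); last first.
    apply/funext => t; rewrite split2 /Rest; ring.
  apply: G3'.
  + exact: Dl.
  + exact: DP.
  + exact: (D2M' (DP j1) (D2M' (D2_cst cf) DR)).
  + exact: l0.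
  + exact: P0.
  + rewrite P0; exact: mul0r.
- rewrite (_ : (fun t => cf * (lamf t * \prod_(j < d) P j t)) =
     (fun t => P j0 t * P j1 t * (Rest t * (cf * lamf t)))); last first.
    apply/funext => t; rewrite split2 /Rest; ring.
  apply: G3'.
  + exact: DP.
  + exact: DP.
  + exact: (D2M' DR (D2M' (D2_cst cf) Dl)).
  + exact: P0.
  + exact: P0.
  + rewrite /Rest (bigD1 j2) /=; last by rewrite h0 h1.
    rewrite P0 !mul0r; reflexivity.
Qed.

Lemma not_2to1 (d r : nat) (n : 'I_d -> nat) (M : set (param R r n)) (y : param R r n)
  (W : tensor R n) :
  (forall c : R -> param R r n, smooth_curve c -> c 0 = y -> G (fun t => inner W (phi (c t)))) ->
  ~ dual_cone (tangent_cone ((@phi R d r n) @` M) (phi y)) W ->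
  ~ two_implies_one M y.
Proof.
move=> HG nDW H21; apply: nDW.
have := H21 (fun X => inner W X) (twice_diff_inner W).
rewrite /stationary grad_inner; apply.
move=> c sc _ c0.
have [_ [g1 g2]] := HG c sc c0.
split; first exact: g1.
change (0 <= derive1 (derive1 (fun t => inner W (phi (c t)))) 0).
rewrite g2; exact: lexx.
Qed.

End S3.

Theorem proposition5p2 (R : realType) (d r : nat) (n : 'I_d -> nat)
  (M : set (param R r n)) (y : param R r n) :
  embedded_submanifold M -> M y ->
  ~ (perp_tensor_span y `<=` dual_cone (tangent_cone ((@phi R d r n) @` M) (phi y))) ->
  ((3 <= d)%N -> ~ two_implies_one M y) /\
  (d = 2%N -> (forall i, lam y i = 0) -> ~ two_implies_one M y).
Proof.
move=> _ _ Hns.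
have [W [SW nDW]] : exists W, perp_tensor_span y W /\
    ~ dual_cone (tangent_cone ((@phi R d r n) @` M) (phi y)) W.
  apply: contrapT => H; apply: Hns => W SW; apply: contrapT => nD; apply: H.
  exists W; split; assumption.
case: SW => m [coef [u [Hperp EW]]].
have main : forall j0 j1 : 'I_d, j0 != j1 ->
    (forall i, lam y i = 0) \/ (exists j2, j2 != j0 /\ j2 != j1) -> ~ two_implies_one M y.
  move=> j0 j1 j01 Hc.
  apply: (not_2to1 _ nDW) => c sc c0.
  rewrite EW.
  rewrite (_ : (fun t => inner _ (phi (c t))) = (fun t => \sum_(k < m) \sum_(i < r)
     coef k * (lam (c t) i * \prod_(j < d) \sum_(a < n j) u k j a * Ymat (c t) a i)));
    last by apply/funext => t; rewrite inner_span.
  apply: G_sum => k; apply: G_sum => i.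
  apply: (@G_term _ _ _ _ j01 (coef k) (fun t => lam (c t) i) (fun j t => \sum_(a < n j) u k j a * Ymat (c t) a i)).
  + exact: coord_D2.
  + move=> j; apply: D2_sum => a; apply: D2M'; [exact: D2_cst | exact: coord_D2].
  + move=> j /=; rewrite c0; exact: Hperp.
  + case: Hc => [Hl | Hj]; [left; rewrite c0; exact: Hl | right; exact: Hj].
split.
- move=> d3.
  have h0 : (0 < d)%N by apply: leq_trans d3.
  have h1 : (1 < d)%N by apply: leq_trans d3.
  have h2 : (2 < d)%N by [].
  apply: (main (Ordinal h0) (Ordinal h1)) => //.
  right; exists (Ordinal h2); split; by [].
- move=> d2 Hl.
  have h0 : (0 < d)%N by rewrite d2.
  have h1 : (1 < d)%N by rewrite d2.
  apply: (main (Ordinal h0) (Ordinal h1)) => //.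
  left; exact: Hl.
Qed.
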